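(* For $|q|<1$ and nonzero complex $x,y,u,v$, $$\begin{aligned}&4qxyuv[-q^2x^2,-q^2y^2,-q^2u^2,-q^2v^2;q^2]_\infty+4q^{1/2}xy[-q^2x^2,-q^2y^2,-qu^2,-qv^2;q^2]_\infty\\&\quad+4q^{1/2}uv[-qx^2,-qy^2,-q^2u^2,-q^2v^2;q^2]_\infty+4[-qx^2,-qy^2,-qu^2,-qv^2;q^2]_\infty\\&=\frac{(q^{1/2};q^{1/2})_\infty^4}{(q^2;q^2)_\infty^4}\Big([-q^{1/4}x,-q^{1/4}y,-q^{1/4}u,-q^{1/4}v;q^{1/2}]_\infty+[q^{1/4}x,q^{1/4}y,-q^{1/4}u,-q^{1/4}v;q^{1/2}]_\infty\\&\qquad+[-q^{1/4}x,-q^{1/4}y,q^{1/4}u,q^{1/4}v;q^{1/2}]_\infty+[q^{1/4}x,q^{1/4}y,q^{1/4}u,q^{1/4}v;q^{1/2}]_\infty\Big).\end{aligned}$$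
   Context: $(z;p)_\infty=\prod_{k\ge0}(1-zp^k)$, $[z;p]_\infty=(z;p)_\infty(p/z;p)_\infty$, and $[z_1,\dots,z_n;p]_\infty=\prod_j[z_j;p]_\infty$. Fractional powers of $q$ are fixed consistently (e.g. $q^{1/4}$ any fixed fourth root, $q^{1/2}=(q^{1/4})^2$). *)

(* Defs.v *)
From Stdlib Require Import Reals ClassicalEpsilon.
Open Scope R_scope.

Definition CC := (R * R)%type.
Definition RtoC (a : R) : CC := (a, 0).
Definition Cplus (z w : CC) : CC := (fst z + fst w, snd z + snd w).
Definition Copp (z : CC) : CC := (- fst z, - snd z).
Definition Cminus (z w : CC) : CC := Cplus z (Copp w).
Definition Cmult (z w : CC) : CC :=
  (fst z * fst w - snd z * snd w, fst z * snd w + snd z * fst w).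
Definition Cinv (z : CC) : CC :=
  let d := fst z ^ 2 + snd z ^ 2 in (fst z / d, - snd z / d).
Definition Cdiv (z w : CC) : CC := Cmult z (Cinv w).
Fixpoint Cpow (z : CC) (n : nat) : CC :=
  match n with O => RtoC 1 | S m => Cmult z (Cpow z m) end.
Definition Cnorm (z : CC) : R := sqrt (fst z ^ 2 + snd z ^ 2).

Declare Scope C_scope.
Delimit Scope C_scope with C.
Infix "+" := Cplus : C_scope.
Infix "-" := Cminus : C_scope.
Notation "- z" := (Copp z) : C_scope.
Infix "*" := Cmult : C_scope.
Infix "/" := Cdiv : C_scope.
Infix "^" := Cpow : C_scope.

Definition Ccv (u : nat -> CC) (l : CC) : Prop :=
  forall eps : R, eps > 0 -> exists N : nat, forall n : nat, (n >= N)%nat ->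
    Cnorm (Cminus (u n) l) < eps.

(* the limit of a sequence (a chosen limit; unique when it exists) *)
Definition Clim (u : nat -> CC) : CC :=
  epsilon (inhabits (RtoC 0)) (fun l => Ccv u l).

Fixpoint qpoch_part (z p : CC) (n : nat) : CC :=
  match n with
  | O => RtoC 1
  | S m => Cmult (qpoch_part z p m) (Cminus (RtoC 1) (Cmult z (Cpow p m)))
  end.

Definition qpoch (z p : CC) : CC := Clim (qpoch_part z p).

Definition theta (z p : CC) : CC := Cmult (qpoch z p) (qpoch (Cdiv p z) p).

Definition theta4 (z1 z2 z3 z4 p : CC) : CC :=
  Cmult (Cmult (Cmult (theta z1 p) (theta z2 p)) (theta z3 p)) (theta z4 p).

(* Main.v *)
Require Import Defs.
From Stdlib Require Import Reals Lra Lia Field Ring ClassicalEpsilon Classical.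
Require Coquelicot.Coquelicot.
Open Scope R_scope.

Definition CCfth : field_theory (RtoC 0) (RtoC 1) Cplus Cmult Cminus Copp Cdiv Cinv (@eq CC)
  := Coquelicot.Complex.C_field_theory.
Add Field CCfield : CCfth.

Notation C0 := (RtoC 0).
Notation C1 := (RtoC 1).

Lemma Cnorm_mult a b : Cnorm (Cmult a b) = Cnorm a * Cnorm b.
Proof. exact (Coquelicot.Complex.Cmod_mult a b). Qed.
Lemma Cnorm_tri a b : Cnorm (Cplus a b) <= Cnorm a + Cnorm b.
Proof. exact (Coquelicot.Complex.Cmod_triangle a b). Qed.
Lemma Cnorm_opp a : Cnorm (Copp a) = Cnorm a.
Proof. exact (Coquelicot.Complex.Cmod_opp a). Qed.
Lemma Cnorm_ge0 a : 0 <= Cnorm a.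
Proof. exact (Coquelicot.Complex.Cmod_ge_0 a). Qed.
Lemma Cnorm_eq0 a : Cnorm a = 0 -> a = C0.
Proof. exact (Coquelicot.Complex.Cmod_eq_0 a). Qed.
Lemma Cnorm_RtoC a : Cnorm (RtoC a) = Rabs a.
Proof. exact (Coquelicot.Complex.Cmod_R a). Qed.
Lemma Cnorm_1 : Cnorm C1 = 1.
Proof. rewrite Cnorm_RtoC; apply Rabs_R1. Qed.
Lemma Cnorm_0 : Cnorm C0 = 0.
Proof. rewrite Cnorm_RtoC; apply Rabs_R0. Qed.
Lemma Cnorm_gt0 a : a <> C0 -> 0 < Cnorm a.
Proof. intro H. destruct (Cnorm_ge0 a) as [h|h]; auto. exfalso; apply H, Cnorm_eq0; auto. Qed.
Lemma Cnorm_minus a b : Cnorm (Cminus a b) <= Cnorm a + Cnorm b.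
Proof. unfold Cminus. rewrite <- (Cnorm_opp b). apply Cnorm_tri. Qed.
Lemma Cnorm_minus_sym a b : Cnorm (Cminus a b) = Cnorm (Cminus b a).
Proof. replace (Cminus a b) with (Copp (Cminus b a)) by ring. apply Cnorm_opp. Qed.
Lemma Cnorm_rev a b : Cnorm a - Cnorm b <= Cnorm (Cminus a b).
Proof. pose proof (Cnorm_tri (Cminus a b) b). replace (Cplus (Cminus a b) b) with a in H by ring. lra. Qed.
Lemma Cnorm_inv a : a <> C0 -> Cnorm (Cinv a) = / Cnorm a.
Proof. exact (Coquelicot.Complex.Cmod_inv a). Qed.
Lemma Cnorm_fst a : Rabs (fst a) <= Cnorm a.
Proof. exact (Coquelicot.Complex.re_le_Cmod a). Qed.
Lemma Cnorm_snd a : Rabs (snd a) <= Cnorm a.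
Proof. eapply Rle_trans; [apply Rmax_r | apply (Coquelicot.Complex.Rmax_Cmod a)]. Qed.
Lemma Cnorm_le_comp a : Cnorm a <= Rabs (fst a) + Rabs (snd a).
Proof.
  destruct a as [a1 a2]. assert (Hq: (a1,a2) = (Cplus (RtoC a1) (Cmult (RtoC a2) (0,1)))).
  { unfold Cplus, Cmult, RtoC; simpl; f_equal; ring. } rewrite Hq at 1.
  eapply Rle_trans; [apply Cnorm_tri|]. rewrite Cnorm_mult, !Cnorm_RtoC.
  assert (E : Cnorm (0,1) = 1).
  { unfold Cnorm; simpl. replace (0*(0*1)+1*(1*1)) with 1 by ring. apply sqrt_1. }
  rewrite E. simpl fst; simpl snd. rewrite Rmult_1_r. lra.
Qed.

Open Scope C_scope.

Lemma Cpow_add z a b : z ^ (a + b) = z ^ a * z ^ b.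
Proof. induction a; simpl. ring. rewrite IHa; ring. Qed.
Lemma Cpow_mul z a b : z ^ (a * b) = (z ^ a) ^ b.
Proof. induction b; simpl. rewrite Nat.mul_0_r; auto.
  rewrite Nat.mul_succ_r, Cpow_add, IHb. ring. Qed.
Lemma Cpow_mult a b n : (a * b) ^ n = a ^ n * b ^ n.
Proof. induction n; simpl. ring. rewrite IHn; ring. Qed.
Lemma Cpow_one n : C1 ^ n = C1.
Proof. induction n; simpl; auto. rewrite IHn; ring. Qed.
Lemma Cpow_inv z n : z <> C0 -> z ^ n * (Cinv z) ^ n = C1.
Proof. intro H. rewrite <- Cpow_mult. replace (z * Cinv z) with C1 by (field; auto). apply Cpow_one. Qed.
Lemma Cnorm_pow z n : Cnorm (z ^ n) = (Cnorm z ^ n)%R.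
Proof. induction n; simpl. apply Cnorm_1. rewrite Cnorm_mult, IHn; auto. Qed.
Lemma Cpow_nz z n : z <> C0 -> z ^ n <> C0.
Proof. intros H E. assert (Cnorm (z^n) = 0%R) by (rewrite E; apply Cnorm_0).
  rewrite Cnorm_pow in H0. revert H0. apply pow_nonzero. pose proof (Cnorm_gt0 z H). lra. Qed.
Lemma Cmult_nz a b : a <> C0 -> b <> C0 -> a * b <> C0.
Proof. intros Ha Hb E. assert (Cnorm (a*b) = 0%R) by (rewrite E; apply Cnorm_0).
  rewrite Cnorm_mult in H. apply Cnorm_gt0 in Ha. apply Cnorm_gt0 in Hb. nra. Qed.

Lemma Ccv_unique u l1 l2 : Ccv u l1 -> Ccv u l2 -> l1 = l2.
Proof.
  intros H1 H2. cut (Cminus l1 l2 = C0). { intro E. replace l1 with (Cplus (Cminus l1 l2) l2) by ring. rewrite E; ring. }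
  apply Cnorm_eq0. destruct (Cnorm_ge0 (Cminus l1 l2)) as [h|h]; [|auto].
  set (e := (Cnorm (Cminus l1 l2) / 2)%R).
  destruct (H1 e) as [N1 HN1]. unfold e; lra.
  destruct (H2 e) as [N2 HN2]. unfold e; lra.
  specialize (HN1 (max N1 N2) ltac:(lia)). specialize (HN2 (max N1 N2) ltac:(lia)).
  pose proof (Cnorm_tri (Cminus l1 (u (max N1 N2))) (Cminus (u (max N1 N2)) l2)).
  replace (Cplus (Cminus l1 (u (max N1 N2))) (Cminus (u (max N1 N2)) l2)) with (Cminus l1 l2) in H by ring.
  rewrite (Cnorm_minus_sym l1 (u _)) in H. unfold e in *. exfalso. lra.
Qed.

Lemma Clim_eq u l : Ccv u l -> Clim u = l.
Proof.
  intro H. unfold Clim. apply (Ccv_unique u). 2: auto.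
  apply (epsilon_spec (inhabits C0) (fun l => Ccv u l)). eauto.
Qed.

Lemma Ccv_const c : Ccv (fun _ => c) c.
Proof. intros e He. exists O. intros. replace (Cminus c c) with C0 by ring. rewrite Cnorm_0; lra. Qed.

Lemma Ccv_plus u v l m : Ccv u l -> Ccv v m -> Ccv (fun n => u n + v n) (l + m).
Proof.
  intros Hu Hv e He. destruct (Hu (e/2)%R) as [N1 H1]. lra. destruct (Hv (e/2)%R) as [N2 H2]. lra.
  exists (max N1 N2). intros n Hn. specialize (H1 n ltac:(lia)). specialize (H2 n ltac:(lia)).
  replace (Cminus (u n + v n) (l + m)) with (Cplus (Cminus (u n) l) (Cminus (v n) m)) by ring.
  eapply Rle_lt_trans. apply Cnorm_tri. lra.
Qed.

Lemma Ccv_scal c u l : Ccv u l -> Ccv (fun n => c * u n) (c * l).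
Proof.
  intros Hu e He. destruct (Hu (e / (Cnorm c + 1))%R) as [N H].
  pose proof (Cnorm_ge0 c). apply Rdiv_lt_0_compat; lra.
  exists N. intros n Hn. specialize (H n Hn).
  replace (Cminus (c * u n) (c * l)) with (c * Cminus (u n) l) by ring.
  rewrite Cnorm_mult. pose proof (Cnorm_ge0 c). pose proof (Cnorm_ge0 (Cminus (u n) l)).
  apply Rmult_lt_compat_r with (r := (Cnorm c + 1)%R) in H; [|lra].
  unfold Rdiv in H. rewrite Rmult_assoc, Rinv_l in H by lra. nra.
Qed.

Lemma Ccv_ext u v l : (exists N0, forall n, (n >= N0)%nat -> u n = v n) -> Ccv u l -> Ccv v l.
Proof.
  intros [N0 HE] Hu e He. destruct (Hu e He) as [N H]. exists (max N N0). intros n Hn.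
  rewrite <- HE by lia. apply H; lia.
Qed.

Lemma Ccv_sub u l (phi : nat -> nat) : Ccv u l -> (forall n, (phi n >= n)%nat) -> Ccv (fun n => u (phi n)) l.
Proof. intros Hu Hphi e He. destruct (Hu e He) as [N H]. exists N. intros n Hn. apply H. specialize (Hphi n). lia. Qed.

Lemma Ccv_mult u v l m : Ccv u l -> Ccv v m -> Ccv (fun n => u n * v n) (l * m).
Proof.
  intros Hu Hv e He.
  pose proof (Cnorm_ge0 l). pose proof (Cnorm_ge0 m).
  destruct (Hu 1%R) as [N1 H1]. lra.
  destruct (Hv (e / (2 * (Cnorm l + 1)))%R) as [N2 H2]. apply Rdiv_lt_0_compat; lra.
  destruct (Hu (e / (2 * (Cnorm m + 1)))%R) as [N3 H3]. apply Rdiv_lt_0_compat; lra.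
  exists (max N1 (max N2 N3)). intros n Hn.
  specialize (H1 n ltac:(lia)). specialize (H2 n ltac:(lia)). specialize (H3 n ltac:(lia)).
  replace (Cminus (u n * v n) (l * m)) with (Cplus (u n * Cminus (v n) m) (m * Cminus (u n) l)) by ring.
  eapply Rle_lt_trans. apply Cnorm_tri. rewrite !Cnorm_mult.
  assert (Hun : (Cnorm (u n) <= Cnorm l + 1)%R).
  { pose proof (Cnorm_rev (u n) l). lra. }
  assert (A : (Cnorm (u n) * Cnorm (Cminus (v n) m) <= e/2)%R).
  { apply Rle_trans with ((Cnorm l + 1) * (e / (2 * (Cnorm l + 1))))%R.
    apply Rmult_le_compat; try apply Cnorm_ge0; lra. right; field; lra. }
  assert (B : (Cnorm m * Cnorm (Cminus (u n) l) < e/2)%R).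
  { apply Rle_lt_trans with (Cnorm m * (e / (2 * (Cnorm m + 1))))%R.
    apply Rmult_le_compat_l; lra.
    apply Rlt_le_trans with ((Cnorm m + 1) * (e / (2 * (Cnorm m + 1))))%R.
    apply Rmult_lt_compat_r. apply Rdiv_lt_0_compat; lra. lra. right; field; lra. }
  lra.
Qed.

Lemma Ccv_minus u v l m : Ccv u l -> Ccv v m -> Ccv (fun n => u n - v n) (l - m).
Proof.
  intros Hu Hv. apply (Ccv_plus u (fun n => Copp (v n))). auto.
  replace (Copp m) with (RtoC (-1) * m) by (unfold RtoC, Cmult, Copp; simpl; f_equal; ring).
  apply (Ccv_ext (fun n => RtoC (-1) * v n)). exists O; intros; unfold RtoC, Cmult, Copp; simpl; f_equal; ring.
  apply Ccv_scal; auto.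
Qed.

Lemma Ccv_norm_le u l B : Ccv u l -> (forall n, (Cnorm (u n) <= B)%R) -> (Cnorm l <= B)%R.
Proof.
  intros Hu HB. apply Rnot_lt_le. intro Hl.
  destruct (Hu (Cnorm l - B)%R) as [N H]. lra. specialize (H N (le_n _)). specialize (HB N).
  pose proof (Cnorm_rev l (u N)). rewrite Cnorm_minus_sym in H. lra.
Qed.

Lemma Ccv_norm_ge u l B : Ccv u l -> (forall n, (B <= Cnorm (u n))%R) -> (B <= Cnorm l)%R.
Proof.
  intros Hu HB. apply Rnot_lt_le. intro Hl.
  destruct (Hu (B - Cnorm l)%R) as [N H]. lra. specialize (H N (le_n _)). specialize (HB N).
  pose proof (Cnorm_rev (u N) l). lra.
Qed.

Lemma Ccv_inv u l : Ccv u l -> l <> C0 -> Ccv (fun n => Cinv (u n)) (Cinv l).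
Proof.
  intros Hu Hl e He. pose proof (Cnorm_gt0 l Hl) as Hlp.
  destruct (Hu (Cnorm l / 2)%R) as [N1 H1]. lra.
  destruct (Hu (e * (Cnorm l * Cnorm l) / 2)%R) as [N2 H2].
  apply Rdiv_lt_0_compat; [apply Rmult_lt_0_compat; nra|lra].
  exists (max N1 N2). intros n Hn. specialize (H1 n ltac:(lia)). specialize (H2 n ltac:(lia)).
  assert (Hun : (Cnorm l / 2 <= Cnorm (u n))%R).
  { pose proof (Cnorm_rev l (u n)). rewrite Cnorm_minus_sym in H. lra. }
  assert (Hu0 : u n <> C0). { intro E. rewrite E, Cnorm_0 in Hun. lra. }
  replace (Cminus (Cinv (u n)) (Cinv l)) with (Cminus l (u n) * Cinv (u n) * Cinv l) by (field; auto).
  rewrite !Cnorm_mult, !Cnorm_inv by auto. rewrite Cnorm_minus_sym.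
  apply Rle_lt_trans with (Cnorm (Cminus (u n) l) * / (Cnorm l / 2) * / Cnorm l)%R.
  apply Rmult_le_compat_r. left; apply Rinv_0_lt_compat; lra.
  apply Rmult_le_compat_l. apply Cnorm_ge0. apply Rinv_le_contravar; lra.
  apply Rlt_le_trans with ((e * (Cnorm l * Cnorm l) / 2) * / (Cnorm l / 2) * / Cnorm l)%R.
  apply Rmult_lt_compat_r. apply Rinv_0_lt_compat; lra.
  apply Rmult_lt_compat_r. apply Rinv_0_lt_compat; lra. auto.
  right. field. lra.
Qed.

Open Scope R_scope.
Open Scope C_scope.

Fixpoint sumC (n : nat) (f : nat -> CC) : CC :=
  match n with O => C0 | S k => sumC k f + f k end.
Fixpoint sumR (n : nat) (f : nat -> R) : R :=
  match n with O => 0%R | S k => (sumR k f + f k)%R end.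

Lemma sumC_ext n f g : (forall k, (k < n)%nat -> f k = g k) -> sumC n f = sumC n g.
Proof. induction n; intros H; simpl; auto. rewrite IHn by (intros; apply H; lia). rewrite H by lia; auto. Qed.
Lemma sumC_plus n f g : sumC n (fun k => f k + g k) = sumC n f + sumC n g.
Proof. induction n; simpl. ring. rewrite IHn; ring. Qed.
Lemma sumC_minus n f g : sumC n (fun k => f k - g k) = sumC n f - sumC n g.
Proof. induction n; simpl. ring. rewrite IHn; ring. Qed.
Lemma sumC_scal n c f : sumC n (fun k => c * f k) = c * sumC n f.
Proof. induction n; simpl. ring. rewrite IHn; ring. Qed.
Lemma sumC_shift n f : sumC (S n) f = f O + sumC n (fun k => f (S k)).
Proof. induction n; simpl in *. ring. rewrite IHn; ring. Qed.
Lemma sumC_add a b f : sumC (a + b) f = sumC a f + sumC b (fun k => f (a + k)%nat).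
Proof. induction b; simpl. rewrite Nat.add_0_r; ring. rewrite Nat.add_succ_r; simpl. rewrite IHb; ring. Qed.
Lemma sumC_rev n f : sumC n f = sumC n (fun k => f (n - S k)%nat).
Proof.
  induction n. auto. rewrite (sumC_shift n (fun k => f (S n - S k)%nat)).
  change (sumC (S n) f) with (sumC n f + f n). rewrite IHn.
  replace (S n - 1)%nat with n by lia.
  assert (E : sumC n (fun k => f (n - S k)%nat) = sumC n (fun k => f (S n - S (S k))%nat)).
  { apply sumC_ext. intros. f_equal. }
  rewrite E. ring.
Qed.

Lemma sumC_double n f : sumC (2 * n) f = sumC n (fun k => f (2 * k)%nat + f (S (2 * k))).
Proof.
  induction n. auto. replace (2 * S n)%nat with (S (S (2 * n))) by lia. cbn [sumC]. rewrite IHn. ring.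
Qed.

Lemma sumC_norm n f (M : nat -> R) : (forall k, (k < n)%nat -> (Cnorm (f k) <= M k)%R) ->
  (Cnorm (sumC n f) <= sumR n M)%R.
Proof.
  induction n; intros H; simpl. rewrite Cnorm_0; lra.
  eapply Rle_trans. apply Cnorm_tri. pose proof (H n ltac:(lia)).
  pose proof (IHn ltac:(intros; apply H; lia)). lra.
Qed.

Lemma sumR_geom n c r a : (0 <= c)%R -> (0 <= r < 1)%R ->
  (sumR n (fun k => c * r ^ (a + k)) <= c * r ^ a / (1 - r))%R.
Proof.
  intros Hc Hr. assert (E : forall m, (sumR m (fun k => c * r ^ (a + k)) = c * r ^ a * (1 - r ^ m) / (1 - r))%R).
  { induction m; simpl. field; lra. rewrite IHm. rewrite pow_add. field. lra. }
  rewrite E. apply Rmult_le_compat_r. left; apply Rinv_0_lt_compat; lra.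
  pose proof (pow_le r a (proj1 Hr)). pose proof (pow_le r n (proj1 Hr)).
  assert (0 <= c * r ^ a)%R by (apply Rmult_le_pos; lra). nra.
Qed.

Lemma telescope u n k : u (n + k)%nat - u n = sumC k (fun i => u (S (n + i)) - u (n + i)%nat).
Proof. induction k; simpl. rewrite Nat.add_0_r; ring. rewrite <- IHk. rewrite Nat.add_succ_r. ring. Qed.

Lemma pow_small r e : (0 <= r < 1)%R -> (0 < e)%R -> exists N, forall n, (n >= N)%nat -> (r ^ n < e)%R.
Proof.
  intros Hr He. destruct (pow_lt_1_zero r ltac:(rewrite Rabs_pos_eq; lra) e He) as [N HN].
  exists N. intros n Hn. specialize (HN n Hn). rewrite Rabs_pos_eq in HN; auto. apply pow_le; lra.
Qed.

Lemma geom_cauchy u c r : (0 <= c)%R -> (0 <= r < 1)%R ->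
  (forall n, (Cnorm (u (S n) - u n)%C <= c * r ^ n)%R) -> exists l, Ccv u l.
Proof.
  intros Hc Hr Hu.
  assert (Hb : forall n k, (Cnorm (u (n + k)%nat - u n)%C <= c * r ^ n / (1 - r))%R).
  { intros n k. rewrite telescope. eapply Rle_trans. apply sumC_norm with (M := fun i => (c * r ^ (n + i))%R).
    intros; auto. apply sumR_geom; auto. }
  assert (Hc2 : forall e, (0 < e)%R -> exists N, forall m n, (m >= N)%nat -> (n >= N)%nat -> (Cnorm (u m - u n)%C < e)%R).
  { intros e He. destruct (pow_small r (e * (1 - r) / (2 * (c + 1))) Hr) as [N HN].
    apply Rdiv_lt_0_compat; [apply Rmult_lt_0_compat|]; lra.
    exists N. intros m n Hm Hn.
    assert (Hk : forall a, (a >= N)%nat -> (c * r ^ a / (1 - r) < e / 2)%R).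
    { intros a Ha. specialize (HN a Ha). apply Rmult_lt_compat_l with (r := (2 * (c + 1))%R) in HN; [|lra].
      replace (2 * (c + 1) * (e * (1 - r) / (2 * (c + 1))))%R with (e * (1 - r))%R in HN by (field; lra).
      apply Rmult_lt_reg_r with (r := (1 - r)%R). lra.
      replace (c * r ^ a / (1 - r) * (1 - r))%R with (c * r ^ a)%R by (field; lra).
      pose proof (pow_le r a (proj1 Hr)). nra. }
    pose proof (Hb N (m - N)%nat). pose proof (Hb N (n - N)%nat).
    replace (N + (m - N))%nat with m in H by lia. replace (N + (n - N))%nat with n in H0 by lia.
    pose proof (Hk N (le_n _)).
    replace (u m - u n) with ((u m - u N) - (u n - u N)) by ring.
    eapply Rle_lt_trans. apply Cnorm_minus. lra. }
  assert (C1' : Cauchy_crit (fun n => fst (u n))).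
  { intros e He. destruct (Hc2 e He) as [N HN]. exists N. intros m n Hm Hn. unfold R_dist.
    eapply Rle_lt_trans; [|apply (HN m n Hm Hn)]. eapply Rle_trans; [|apply Cnorm_fst]. simpl. right; f_equal; ring. }
  assert (C2' : Cauchy_crit (fun n => snd (u n))).
  { intros e He. destruct (Hc2 e He) as [N HN]. exists N. intros m n Hm Hn. unfold R_dist.
    eapply Rle_lt_trans; [|apply (HN m n Hm Hn)]. eapply Rle_trans; [|apply Cnorm_snd]. simpl. right; f_equal; ring. }
  destruct (Rcomplete.R_complete _ C1') as [l1 H1]. destruct (Rcomplete.R_complete _ C2') as [l2 H2].
  exists (l1, l2). intros e He. destruct (H1 (e/2)%R) as [N1 HN1]. lra. destruct (H2 (e/2)%R) as [N2 HN2]. lra.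
  exists (max N1 N2). intros n Hn. specialize (HN1 n ltac:(lia)). specialize (HN2 n ltac:(lia)).
  unfold R_dist in *. eapply Rle_lt_trans. apply Cnorm_le_comp. simpl. unfold Rminus in *. lra.
Qed.

Lemma pow_le1 x n : (0 <= x <= 1)%R -> (x ^ n <= 1)%R.
Proof. intro H. rewrite <- (pow1 n). apply pow_incr; lra. Qed.

Lemma one_plus_le_exp a : (1 + a <= exp a)%R.
Proof. apply exp_ineq1_le. Qed.

Lemma exp_le a b : (a <= b)%R -> (exp a <= exp b)%R.
Proof. intros [H|H]. left; apply exp_increasing; auto. subst; lra. Qed.

Lemma one_minus_ge_exp a W : (0 <= a <= W)%R -> (W < 1)%R -> (exp (- (a / (1 - W))) <= 1 - a)%R.
Proof.
  intros Ha HW. apply Rle_trans with (exp (- (a / (1 - a)))).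
  { apply exp_le. apply Ropp_le_contravar. unfold Rdiv. apply Rmult_le_compat_l. lra.
    apply Rinv_le_contravar; lra. }
  rewrite exp_Ropp. apply Rle_trans with (/ (1 + a / (1 - a)))%R.
  2:{ right; field; lra. }
  apply Rinv_le_contravar. apply Rplus_lt_le_0_compat. lra. unfold Rdiv; apply Rmult_le_pos; [lra|left; apply Rinv_0_lt_compat; lra].
  apply one_plus_le_exp.
Qed.

Lemma part_upper w p n : (Cnorm p < 1)%R ->
  (Cnorm (qpoch_part w p n) <= exp (Cnorm w * (1 - Cnorm p ^ n) / (1 - Cnorm p)))%R.
Proof.
  intro Hp. pose proof (Cnorm_ge0 p). pose proof (Cnorm_ge0 w). induction n; simpl qpoch_part.
  - rewrite Cnorm_1. replace (Cnorm w * (1 - Cnorm p ^ 0) / (1 - Cnorm p))%R with 0%R by (simpl; field; lra).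
    rewrite exp_0; lra.
  - rewrite Cnorm_mult.
    replace (Cnorm w * (1 - Cnorm p ^ S n) / (1 - Cnorm p))%R with
      (Cnorm w * (1 - Cnorm p ^ n) / (1 - Cnorm p) + Cnorm w * Cnorm p ^ n)%R by (simpl; field; lra).
    rewrite exp_plus. apply Rmult_le_compat; try apply Cnorm_ge0; auto.
    eapply Rle_trans. apply Cnorm_minus. rewrite Cnorm_1, Cnorm_mult, Cnorm_pow.
    apply one_plus_le_exp.
Qed.

Lemma part_upper' w p n : (Cnorm p < 1)%R ->
  (Cnorm (qpoch_part w p n) <= exp (Cnorm w / (1 - Cnorm p)))%R.
Proof.
  intro Hp. eapply Rle_trans. apply part_upper; auto. apply exp_le.
  pose proof (Cnorm_ge0 p). pose proof (Cnorm_ge0 w). pose proof (pow_le (Cnorm p) n H).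
  unfold Rdiv. apply Rmult_le_compat_r. left; apply Rinv_0_lt_compat; lra. nra.
Qed.

Lemma part_lower w p n : (Cnorm p < 1)%R -> (Cnorm w < 1)%R ->
  (exp (- (Cnorm w * (1 - Cnorm p ^ n) / ((1 - Cnorm w) * (1 - Cnorm p)))) <= Cnorm (qpoch_part w p n))%R.
Proof.
  intros Hp Hw. pose proof (Cnorm_ge0 p). pose proof (Cnorm_ge0 w). induction n; simpl qpoch_part.
  - rewrite Cnorm_1. replace (Cnorm w * (1 - Cnorm p ^ 0) / ((1 - Cnorm w) * (1 - Cnorm p)))%R with 0%R by (simpl; field; lra).
    rewrite Ropp_0, exp_0; lra.
  - rewrite Cnorm_mult.
    replace (- (Cnorm w * (1 - Cnorm p ^ S n) / ((1 - Cnorm w) * (1 - Cnorm p))))%R with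
      (- (Cnorm w * (1 - Cnorm p ^ n) / ((1 - Cnorm w) * (1 - Cnorm p))) + - (Cnorm w * Cnorm p ^ n / (1 - Cnorm w)))%R
      by (simpl; field; lra).
    rewrite exp_plus. apply Rmult_le_compat; try (left; apply exp_pos); auto.
    pose proof (pow_le (Cnorm p) n H). assert (Cnorm p ^ n <= 1)%R by (apply pow_le1; lra).
    eapply Rle_trans. apply one_minus_ge_exp with (W := Cnorm w). split. nra. nra. auto.
    pose proof (Cnorm_rev C1 (w * p ^ n)) as H4. rewrite Cnorm_1, Cnorm_mult, Cnorm_pow in H4. lra.
Qed.

Lemma part_lower' w p n : (Cnorm p < 1)%R -> (Cnorm w < 1)%R ->
  (exp (- (Cnorm w / ((1 - Cnorm w) * (1 - Cnorm p)))) <= Cnorm (qpoch_part w p n))%R.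
Proof.
  intros Hp Hw. eapply Rle_trans; [|apply part_lower; auto]. apply exp_le. apply Ropp_le_contravar.
  pose proof (Cnorm_ge0 p). pose proof (Cnorm_ge0 w). pose proof (pow_le (Cnorm p) n H).
  unfold Rdiv. apply Rmult_le_compat_r. left; apply Rinv_0_lt_compat. apply Rmult_lt_0_compat; lra. nra.
Qed.

Lemma qpoch_cv w p : (Cnorm p < 1)%R -> exists l, Ccv (qpoch_part w p) l.
Proof.
  intro Hp. pose proof (Cnorm_ge0 p). pose proof (Cnorm_ge0 w).
  apply geom_cauchy with (c := (exp (Cnorm w / (1 - Cnorm p)) * Cnorm w)%R) (r := Cnorm p).
  apply Rmult_le_pos; auto. left; apply exp_pos. lra.
  intro n. simpl qpoch_part.
  replace (qpoch_part w p n * (C1 - w * p ^ n) - qpoch_part w p n) with (Copp (qpoch_part w p n * w * p ^ n)) by ring.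
  rewrite Cnorm_opp, !Cnorm_mult, Cnorm_pow.
  apply Rmult_le_compat_r. apply pow_le; auto. apply Rmult_le_compat_r; auto.
  apply part_upper'; auto.
Qed.

Lemma qpoch_spec w p : (Cnorm p < 1)%R -> Ccv (qpoch_part w p) (qpoch w p).
Proof. intro Hp. destruct (qpoch_cv w p Hp) as [l Hl]. unfold qpoch. rewrite (Clim_eq _ l Hl). auto. Qed.

Lemma qpoch_nz w p : (Cnorm p < 1)%R -> (Cnorm w < 1)%R -> qpoch w p <> C0.
Proof.
  intros Hp Hw E. pose proof (Ccv_norm_ge _ _ _ (qpoch_spec w p Hp) (fun n => part_lower' w p n Hp Hw)).
  rewrite E, Cnorm_0 in H. pose proof (exp_pos (- (Cnorm w / ((1 - Cnorm w) * (1 - Cnorm p))))). lra.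
Qed.

Lemma part_split w p a b : qpoch_part w p (a + b) = qpoch_part w p a * qpoch_part (w * p ^ a) p b.
Proof. induction b; simpl. rewrite Nat.add_0_r; ring. rewrite Nat.add_succ_r. simpl. rewrite IHb, Cpow_add. ring. Qed.

Open Scope R_scope.
Open Scope C_scope.

Notation m1 := (Copp C1).

Fixpoint tri (n : nat) : nat := match n with O => O | S k => (tri k + k)%nat end.
Definition cc (p : CC) (m : nat) : CC := m1 ^ m * p ^ (tri m).
Fixpoint qbin (p : CC) (n j : nat) : CC :=
  match n with
  | O => match j with O => C1 | S _ => C0 end
  | S n' => match j with O => C1 | S j' => qbin p n' (S j') + p ^ (n' - j') * qbin p n' j' end
  end.

Lemma tri_add a b : tri (a + b) = (tri a + tri b + a * b)%nat.
Proof. induction b; simpl. rewrite Nat.add_0_r; nia. rewrite Nat.add_succ_r. simpl. rewrite IHb. nia. Qed.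
Lemma tri_double n : (2 * tri n + n = n * n)%nat.
Proof. induction n; simpl. auto. nia. Qed.

Lemma qbin_zero p n j : (n < j)%nat -> qbin p n j = C0.
Proof.
  revert j. induction n; intros j H; destruct j; simpl; try lia; auto.
  rewrite !IHn by lia. ring.
Qed.

Lemma cc_S p j : cc p (S j) = m1 * p ^ j * cc p j.
Proof. unfold cc. simpl. rewrite Cpow_add. ring. Qed.

Lemma cauchy_qbin w p n : qpoch_part w p n = sumC (S n) (fun j => qbin p n j * cc p j * w ^ j).
Proof.
  induction n.
  - simpl. unfold cc; simpl. ring.
  - change (qpoch_part w p (S n)) with (qpoch_part w p n * (C1 - w * p ^ n)). rewrite IHn.
    rewrite (sumC_shift (S n) (fun j => qbin p (S n) j * cc p j * w ^ j)).
    simpl qbin at 1.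
    assert (E1 : sumC (S n) (fun k => qbin p (S n) (S k) * cc p (S k) * w ^ (S k)) =
      sumC (S n) (fun k => qbin p n (S k) * cc p (S k) * w ^ (S k)) +
      sumC (S n) (fun k => (Copp (w * p ^ n)) * (qbin p n k * cc p k * w ^ k))).
    { rewrite <- sumC_plus. apply sumC_ext. intros k Hk. simpl qbin. rewrite cc_S.
      replace (p ^ n) with (p ^ (n - k) * p ^ k). 2:{ rewrite <- Cpow_add. f_equal. lia. }
      simpl. ring. }
    rewrite E1. rewrite sumC_scal.
    assert (E2 : sumC (S n) (fun j => qbin p n j * cc p j * w ^ j) =
       C1 + sumC (S n) (fun k => qbin p n (S k) * cc p (S k) * w ^ (S k))).
    { rewrite sumC_shift. change (sumC (S n) ?f) with (sumC n f + f n).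
      cbv beta. rewrite (qbin_zero p n (S n)) by lia. assert (Hq0 : qbin p n 0 = C1) by (destruct n; auto). rewrite Hq0. unfold cc; simpl. ring. }
    rewrite E2. unfold cc; simpl. ring.
Qed.

Notation P p k := (qpoch_part p p k).

Lemma qbin_closed p n j : (j <= n)%nat -> qbin p n j * P p j * P p (n - j) = P p n.
Proof.
  revert j. induction n; intros j Hj.
  - destruct j; [|lia]. simpl. ring.
  - destruct j.
    + simpl. ring.
    + simpl qbin. destruct (Nat.eq_dec j n) as [->|Hne].
      * rewrite qbin_zero by lia. replace (S n - S n)%nat with O by lia. replace (n - n)%nat with O by lia.
        pose proof (IHn n (le_n _)). replace (n - n)%nat with O in H by lia.
        simpl in *. transitivity ((qbin p n n * P p n * C1) * (C1 - p * p ^ n)). ring. rewrite H. ring.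
      * assert (Hex : exists k, n = (k + S j)%nat) by (exists (n - S j)%nat; lia). destruct Hex as [k Hk]. subst n.
        pose proof (IHn (S j) ltac:(lia)) as H1. pose proof (IHn j ltac:(lia)) as H2.
        replace (k + S j - S j)%nat with k in H1 by lia.
        replace (k + S j - j)%nat with (S k) in H2 by lia.
        replace (S (k + S j) - S j)%nat with (S k) by lia.
        replace (k + S j - j)%nat with (S k) by lia.
        change (P p (S (k + S j))) with (P p (k + S j) * (C1 - p * p ^ (k + S j))).
        transitivity ((qbin p (k + S j) (S j) * P p (S j) * P p k) * (C1 - p * p ^ k)
           + p ^ (S k) * (qbin p (k + S j) j * P p j * P p (S k)) * (C1 - p * p ^ j)).
        { change (P p (S k)) with (P p k * (C1 - p * p ^ k)).
          change (P p (S j)) with (P p j * (C1 - p * p ^ j)). ring. }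
        rewrite H1, H2.
        replace (p * p ^ (k + S j)) with (p ^ (S k) * (p * p ^ j)) by (rewrite Cpow_add; simpl; ring).
        simpl. ring.
Qed.

Lemma pexp p s A B C D : p * s = C1 -> (A + D = B + C)%nat -> p ^ A * s ^ B = p ^ C * s ^ D.
Proof.
  intros Hps HA. assert (Hu : forall n, p ^ n * s ^ n = C1).
  { intro n. rewrite <- Cpow_mult, Hps. apply Cpow_one. }
  transitivity (p ^ A * s ^ B * (p ^ D * s ^ D)). rewrite Hu; ring.
  transitivity (p ^ (A + D) * s ^ (B + D)). rewrite !Cpow_add; ring.
  rewrite HA. rewrite !Cpow_add. transitivity (p ^ C * s ^ D * (p ^ B * s ^ B)). ring. rewrite Hu; ring.
Qed.

Lemma part_one w p n : qpoch_part w p (S n) = (C1 - w) * qpoch_part (w * p) p n.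
Proof.
  pose proof (part_split w p 1 n) as H. simpl plus in H. rewrite H. f_equal.
  simpl. ring. f_equal. simpl. ring.
Qed.

Lemma B1 p z N : p <> C0 -> z <> C0 ->
  qpoch_part (z * Cinv p ^ N) p N = (Copp z) ^ N * Cinv p ^ (tri (S N)) * qpoch_part (p / z) p N.
Proof.
  intros Hp Hz. set (s := Cinv p). assert (Hps : s * p = C1) by (unfold s; field; auto).
  induction N.
  - simpl. ring.
  - rewrite part_one.
    replace (z * s ^ S N * p) with (z * s ^ N) by (change (s ^ S N) with (s * s ^ N); transitivity (z * s ^ N * (s * p)); [rewrite Hps; ring | ring]).
    rewrite IHN.
    change (qpoch_part (p / z) p (S N)) with (qpoch_part (p / z) p N * (C1 - p / z * p ^ N)).
    change (tri (S (S N))) with (tri (S N) + S N)%nat. rewrite Cpow_add.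
    change ((Copp z) ^ S N) with (Copp z * (Copp z) ^ N).
    set (X := s ^ S N).
    assert (HX : X * (p * p ^ N) = C1).
    { unfold X. change (p * p ^ N) with (p ^ S N). rewrite <- Cpow_mult.
      replace (s * p) with C1 by auto. apply Cpow_one. }
    replace (C1 - z * X) with (Copp z * X * (C1 - p / z * p ^ N)).
    ring.
    transitivity (Copp z * X + X * (p * p ^ N)). field; auto. rewrite HX; ring.
Qed.

Lemma Copp_m1 z : Copp z = m1 * z.
Proof. ring. Qed.

Lemma T1 p s z Q N m : p * s = C1 ->
  Q * cc p (N + m) * (z * s ^ N) ^ (N + m) = ((Copp z) ^ N * s ^ (tri (S N))) * (Q * cc p m * z ^ m).
Proof.
  intro Hps.
  transitivity (Q * m1 ^ N * m1 ^ m * p ^ (tri m) * z ^ N * z ^ m * (p ^ (tri N + N * m) * s ^ (N * (N + m)))).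
  { unfold cc. rewrite tri_add, Cpow_mult, <- Cpow_mul. rewrite !Cpow_add. ring. }
  rewrite (pexp p s (tri N + N * m) (N * (N + m)) 0 (tri N + N)) by (auto; pose proof (tri_double N); nia).
  change (tri (S N)) with (tri N + N)%nat. rewrite (Copp_m1 z), Cpow_mult. unfold cc. simpl (p ^ 0). ring.
Qed.

Lemma T2 p s z Q m k : p * s = C1 -> s * p = C1 -> z <> C0 ->
  Q * cc p k * (z * s ^ (S m + k)) ^ k =
  ((Copp z) ^ (S m + k) * s ^ (tri (S (S m + k)))) * (Q * cc p (S m) * (p / z) ^ (S m)).
Proof.
  intros Hps Hsp Hz.
  transitivity (Q * m1 ^ k * z ^ k * (p ^ (tri k) * s ^ ((S m + k) * k))).
  { unfold cc. rewrite Cpow_mult, <- Cpow_mul. ring. }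
  rewrite (pexp p s (tri k) ((S m + k) * k) (tri (S m) + S m) (tri (S m + k) + (S m + k))).
  2: auto.
  2:{ rewrite tri_add. pose proof (tri_double k). nia. }
  change (tri (S (S m + k))) with (tri (S m + k) + (S m + k))%nat.
  assert (Ha : m1 ^ S m * m1 ^ S m = C1). { rewrite <- Cpow_mult. replace (m1 * m1) with C1 by ring. apply Cpow_one. }
  assert (Hb : z ^ S m * Cinv z ^ S m = C1) by (apply Cpow_inv; auto).
  unfold Cdiv. rewrite (Copp_m1 z), !Cpow_mult. unfold cc.
  rewrite (Cpow_add m1 (S m) k), (Cpow_add z (S m) k), (Cpow_add p (tri (S m)) (S m)).
  set (S1 := s ^ (tri (S m + k) + (S m + k))).
  transitivity ((m1 ^ S m * m1 ^ S m) * (z ^ S m * Cinv z ^ S m) * (Q * m1 ^ k * z ^ k * (p ^ tri (S m) * p ^ S m * S1))).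
  rewrite Ha, Hb; ring. ring.
Qed.

Lemma T2' p s z Q N m : p * s = C1 -> s * p = C1 -> z <> C0 -> (m < N)%nat ->
  Q * cc p (N - S m) * (z * s ^ N) ^ (N - S m) =
  ((Copp z) ^ N * s ^ (tri (S N))) * (Q * cc p (S m) * (p / z) ^ (S m)).
Proof.
  intros H1 H2 H3 Hm. remember (N - S m)%nat as k. assert (E : N = (S m + k)%nat) by lia. subst N.
  apply T2; auto.
Qed.

Lemma fin_jtp p z N : p <> C0 -> z <> C0 ->
  qpoch_part z p N * qpoch_part (p / z) p N =
  sumC (S N) (fun m => qbin p (N + N) (N + m) * cc p m * z ^ m) +
  sumC N (fun m => qbin p (N + N) (N - S m) * cc p (S m) * (p / z) ^ (S m)).
Proof.
  intros Hp Hz. set (s := Cinv p).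
  assert (Hps : p * s = C1) by (unfold s; field; auto).
  assert (Hsp : s * p = C1) by (unfold s; field; auto).
  set (K := (Copp z) ^ N * s ^ (tri (S N))).
  assert (HK : K <> C0).
  { apply Cmult_nz; apply Cpow_nz. intro E. apply Hz. replace z with (Copp (Copp z)) by ring. rewrite E. ring.
    intro E. rewrite E in Hps. apply Coquelicot.Complex.C1_nz. change (C1 = C0). rewrite <- Hps. ring. }
  pose proof (cauchy_qbin (z * s ^ N) p (N + N)) as H0.
  rewrite part_split in H0.
  replace (z * s ^ N * p ^ N) with z in H0.
  2:{ transitivity (z * (p ^ N * s ^ N)). rewrite <- Cpow_mult, Hps, Cpow_one; ring. ring. }
  unfold s in H0. rewrite B1 in H0 by auto. fold s in H0. fold K in H0.
  replace (S (N + N)) with (N + S N)%nat in H0 by lia.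
  rewrite sumC_add, sumC_rev in H0.
  rewrite (sumC_ext N _ (fun m => K * (qbin p (N + N) (N - S m) * cc p (S m) * (p / z) ^ (S m)))) in H0.
  2:{ intros m Hm. apply T2'; auto. }
  rewrite (sumC_ext (S N) _ (fun m => K * (qbin p (N + N) (N + m) * cc p m * z ^ m))) in H0.
  2:{ intros m Hm. apply T1; auto. }
  rewrite !sumC_scal in H0.
  apply (f_equal (fun t => Cinv K * t)) in H0.
  transitivity (Cinv K * (K * qpoch_part (p / z) p N * qpoch_part z p N)). field; auto.
  rewrite H0. field; auto.
Qed.

Open Scope R_scope.
Open Scope C_scope.

Definition gpart (p w : CC) (n : nat) : CC := sumC n (fun m => cc p m * w ^ m).
Definition G (p w : CC) : CC := Clim (gpart p w).

Lemma Cnorm_m1 : Cnorm m1 = 1%R.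
Proof. rewrite Cnorm_opp; apply Cnorm_1. Qed.

Lemma Cnorm_cc p m : Cnorm (cc p m) = (Cnorm p ^ tri m)%R.
Proof. unfold cc. rewrite Cnorm_mult, !Cnorm_pow, Cnorm_m1, pow1. ring. Qed.

Lemma gterm_bound p w : (Cnorm p < 1)%R -> exists A, (0 <= A)%R /\
  forall m, (Cnorm (cc p m * w ^ m)%C <= A * (1/2) ^ m)%R.
Proof.
  intro Hp. set (t := Cnorm p). set (W := Cnorm w). set (W' := Rmax 1 W).
  assert (Ht : (0 <= t < 1)%R) by (split; [apply Cnorm_ge0|auto]).
  assert (HW : (0 <= W)%R) by apply Cnorm_ge0.
  assert (HW1 : (1 <= W')%R) by apply Rmax_l. assert (HW2 : (W <= W')%R) by apply Rmax_r.
  set (b := fun m => (t ^ tri m * W ^ m * 2 ^ m)%R).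
  assert (Hb0 : forall m, (0 <= b m)%R).
  { intro m. unfold b. apply Rmult_le_pos; [apply Rmult_le_pos|]; apply pow_le; lra. }
  assert (HbS : forall m, b (S m) = (b m * (2 * t ^ m * W))%R).
  { intro m. unfold b. simpl tri. rewrite pow_add. simpl. ring. }
  destruct (pow_small t (/ (2 * (W + 1)))%R Ht) as [K HK].
  { apply Rinv_0_lt_compat; lra. }
  assert (HK' : forall m, (m >= K)%nat -> (2 * t ^ m * W <= 1)%R).
  { intros m Hm. specialize (HK m Hm). apply Rmult_lt_compat_l with (r := (2 * (W + 1))%R) in HK; [|lra].
    rewrite Rinv_r in HK by lra. pose proof (pow_le t m (proj1 Ht)). nra. }
  assert (C1' : forall m, (b m <= (2 * W') ^ m)%R).
  { induction m. unfold b; simpl; lra. rewrite HbS. simpl.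
    assert (t ^ m <= 1)%R by (apply pow_le1; lra). pose proof (pow_le t m (proj1 Ht)).
    assert (0 <= 2 * t ^ m * W)%R by (apply Rmult_le_pos; [apply Rmult_le_pos|]; lra).
    apply Rle_trans with ((2 * W') ^ m * (2 * t ^ m * W))%R.
    apply Rmult_le_compat_r; auto.
    rewrite Rmult_comm. apply Rmult_le_compat_r. apply pow_le; lra. nra. }
  assert (C2' : forall j, (b (K + j)%nat <= b K)%R).
  { induction j. rewrite Nat.add_0_r; lra. rewrite Nat.add_succ_r, HbS.
    specialize (HK' (K + j)%nat ltac:(lia)). pose proof (Hb0 (K + j)%nat).
    assert (0 <= 2 * t ^ (K + j) * W)%R by (apply Rmult_le_pos; [apply Rmult_le_pos; [lra|apply pow_le; lra]|lra]).
    nra. }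
  exists ((2 * W') ^ K)%R. split. apply pow_le; lra.
  intro m. rewrite Cnorm_mult, Cnorm_cc, Cnorm_pow. fold t W.
  replace (t ^ tri m * W ^ m)%R with (b m * (1/2) ^ m)%R.
  2:{ unfold b. rewrite Rmult_assoc, <- Rpow_mult_distr. replace (2 * (1/2))%R with 1%R by field. rewrite pow1; ring. }
  apply Rmult_le_compat_r. apply pow_le; lra.
  destruct (Compare_dec.le_lt_dec m K).
  - eapply Rle_trans. apply C1'. apply Rle_pow; lra || lia.
  - replace m with (K + (m - K))%nat by lia. eapply Rle_trans. apply C2'.
    eapply Rle_trans. apply C1'. lra.
Qed.

Lemma G_spec p w : (Cnorm p < 1)%R -> Ccv (gpart p w) (G p w).
Proof.
  intro Hp. destruct (gterm_bound p w Hp) as [A [HA HB]].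
  destruct (geom_cauchy (gpart p w) A (1/2) HA ltac:(lra)) as [l Hl].
  { intro n. unfold gpart. simpl sumC. replace (sumC n (fun m => cc p m * w ^ m) + cc p n * w ^ n - sumC n (fun m => cc p m * w ^ m)) with (cc p n * w ^ n) by ring. apply HB. }
  unfold G. rewrite (Clim_eq _ l Hl). auto.
Qed.

Lemma gpart_shift P w n : gpart P w (S n) = C1 - w * gpart P (P * w) n.
Proof.
  unfold gpart. rewrite sumC_shift. unfold cc at 1. simpl (m1 ^ 0). simpl (tri 0). simpl (P ^ 0). simpl (w ^ 0).
  rewrite <- sumC_scal. unfold Cminus. rewrite <- (Cpow_one O) at 1.
  assert (E : sumC n (fun k => cc P (S k) * w ^ S k) = Copp (sumC n (fun k => w * (cc P k * (P * w) ^ k)))).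
  { replace (Copp (sumC n (fun k => w * (cc P k * (P * w) ^ k)))) with (m1 * sumC n (fun k => w * (cc P k * (P * w) ^ k))) by ring.
    rewrite <- sumC_scal. apply sumC_ext. intros k _. rewrite cc_S, Cpow_mult. simpl. ring. }
  rewrite E. simpl. ring.
Qed.

Lemma G_shift P w : (Cnorm P < 1)%R -> G P w = C1 - w * G P (P * w).
Proof.
  intro HP. apply (Ccv_unique (fun n => gpart P w (S n))).
  - apply Ccv_sub. apply G_spec; auto. intro; lia.
  - apply (Ccv_ext (fun n => C1 - w * gpart P (P * w) n)). exists O. intros. rewrite gpart_shift; auto.
    apply Ccv_minus. apply Ccv_const. apply Ccv_scal. apply G_spec; auto.
Qed.

Lemma tri_2 k : tri (k + k) = (tri k + tri k + tri k + tri k + k)%nat.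
Proof. rewrite tri_add. pose proof (tri_double k). nia. Qed.

Lemma par1 p w k : cc p (k + k) * w ^ (k + k) = cc (p ^ 4) k * (Copp (p * w ^ 2)) ^ k.
Proof.
  unfold cc. rewrite tri_2. replace (Copp (p * w ^ 2)) with (m1 * (p * (w * (w * C1)))) by (simpl; ring).
  change (p ^ 4) with (p * (p * (p * (p * C1)))). rewrite !Cpow_mult, !Cpow_add, !Cpow_one. ring.
Qed.

Lemma par2 p w k : cc p (S (k + k)) * w ^ (S (k + k)) = Copp w * (cc (p ^ 4) k * (Copp (p ^ 3 * w ^ 2)) ^ k).
Proof.
  rewrite cc_S. change (w ^ S (k + k)) with (w * w ^ (k + k)).
  transitivity (m1 * w * p ^ (k + k) * (cc p (k + k) * w ^ (k + k))). ring. rewrite par1.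
  unfold cc. replace (Copp (p ^ 3 * w ^ 2)) with (m1 * (p * (p * (p * C1))) * (w * (w * C1))) by (simpl; ring).
  replace (Copp (p * w ^ 2)) with (m1 * (p * C1) * (w * (w * C1))) by (simpl; ring).
  rewrite !Cpow_mult, !Cpow_add, !Cpow_one. ring.
Qed.

Lemma G_parity p w : (Cnorm p < 1)%R ->
  G p w = G (p ^ 4) (Copp (p * w ^ 2)) - w * G (p ^ 4) (Copp (p ^ 3 * w ^ 2)).
Proof.
  intro Hp. assert (Hp4 : (Cnorm (p ^ 4)%C < 1)%R).
  { rewrite Cnorm_pow. pose proof (Cnorm_ge0 p). apply pow_lt_1_compat; [lra|lia]. }
  apply (Ccv_unique (fun n => gpart p w (n + n))).
  - apply Ccv_sub. apply G_spec; auto. intro; lia.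
  - apply (Ccv_ext (fun n => gpart (p ^ 4) (Copp (p * w ^ 2)) n - w * gpart (p ^ 4) (Copp (p ^ 3 * w ^ 2)) n)).
    + exists O. intros n _. unfold gpart. replace (n + n)%nat with (2 * n)%nat by lia. rewrite sumC_double.
      rewrite <- sumC_scal, <- sumC_minus. apply sumC_ext. intros k _.
      replace (2 * k)%nat with (k + k)%nat by lia. rewrite par1, par2. ring.
    + apply Ccv_minus. apply G_spec; auto. apply Ccv_scal. apply G_spec; auto.
Qed.

Open Scope R_scope.
Open Scope C_scope.

Lemma Ccv_sumC K (f : nat -> nat -> CC) g : (forall m, Ccv (fun N => f N m) (g m)) ->
  Ccv (fun N => sumC K (f N)) (sumC K g).
Proof.
  intro H. induction K; simpl. apply Ccv_const. apply Ccv_plus; auto.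
Qed.

Lemma Ccv_sub' u l (phi : nat -> nat) c : Ccv u l -> (forall n, (n <= phi n + c)%nat) -> Ccv (fun n => u (phi n)) l.
Proof. intros Hu Hphi e He. destruct (Hu e He) as [N H]. exists (N + c)%nat. intros n Hn. apply H. specialize (Hphi n). lia. Qed.

Lemma tail_bound (f : nat -> CC) A K n : (0 <= A)%R -> (forall m, (Cnorm (f m) <= A * (1/2) ^ m)%R) ->
  (Cnorm (sumC n (fun i => f (K + i)%nat)) <= 2 * A * (1/2) ^ K)%R.
Proof.
  intros HA Hf. eapply Rle_trans. apply sumC_norm with (M := fun i => (A * (1/2) ^ (K + i))%R).
  intros; apply Hf. eapply Rle_trans. apply sumR_geom; lra. right; field.
Qed.

Lemma tannery (f : nat -> nat -> CC) (g : nat -> CC) (l : CC) (A : R) (h : nat -> nat) :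
  (0 <= A)%R -> (forall N m, (Cnorm (f N m) <= A * (1/2) ^ m)%R) ->
  (forall m, Ccv (fun N => f N m) (g m)) -> Ccv (fun n => sumC n g) l -> (forall N, (N <= h N)%nat) ->
  Ccv (fun N => sumC (h N) (f N)) l.
Proof.
  intros HA Hf Hg Hl Hh e He.
  assert (Hgb : forall m, (Cnorm (g m) <= A * (1/2) ^ m)%R).
  { intro m. apply (Ccv_norm_le _ _ _ (Hg m)). intro; apply Hf. }
  destruct (pow_small (1/2) (e / (6 * (A + 1)))%R ltac:(lra)) as [K HK].
  { apply Rdiv_lt_0_compat; lra. }
  assert (HKe : (2 * A * (1/2) ^ K < e / 3)%R).
  { specialize (HK K (le_n _)). apply Rle_lt_trans with (2 * A * (e / (6 * (A + 1))))%R.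
    apply Rmult_le_compat_l; lra. apply Rmult_lt_reg_r with (r := (6 * (A + 1))%R). lra.
    replace (2 * A * (e / (6 * (A + 1))) * (6 * (A + 1)))%R with (2 * A * e)%R by (field; lra).
    replace (e / 3 * (6 * (A + 1)))%R with (2 * A * e + 2 * e)%R by field. lra. }
  assert (Hlg : (Cnorm (l - sumC K g)%C <= 2 * A * (1/2) ^ K)%R).
  { apply (Ccv_norm_le (fun n => sumC (K + n) g - sumC K g)).
    apply Ccv_minus. apply (Ccv_sub (fun n => sumC n g)); auto. intro; lia. apply Ccv_const.
    intro n. rewrite sumC_add. replace (sumC K g + sumC n (fun k => g (K + k)%nat) - sumC K g) with (sumC n (fun k => g (K + k)%nat)) by ring.
    apply tail_bound; auto. }
  destruct (Ccv_sumC K f g Hg (e / 3)%R ltac:(lra)) as [N1 HN1].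
  exists (max N1 K). intros N HN. specialize (HN1 N ltac:(lia)).
  assert (HhK : (K <= h N)%nat) by (specialize (Hh N); lia).
  replace (h N) with (K + (h N - K))%nat by lia. rewrite sumC_add.
  pose proof (tail_bound (f N) A K (h N - K) HA (Hf N)).
  replace (sumC K (f N) + sumC (h N - K) (fun k => f N (K + k)%nat) - l) with
    (sumC (h N - K) (fun k => f N (K + k)%nat) + ((sumC K (f N) - sumC K g) - (l - sumC K g))) by ring.
  eapply Rle_lt_trans. apply Cnorm_tri. eapply Rle_lt_trans. apply Rplus_le_compat_l. apply Cnorm_minus.
  lra.
Qed.

Lemma P_nz p k : (Cnorm p < 1)%R -> qpoch_part p p k <> C0.
Proof.
  intros Hp E. pose proof (part_lower' p p k Hp Hp). rewrite E, Cnorm_0 in H.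
  pose proof (exp_pos (- (Cnorm p / ((1 - Cnorm p) * (1 - Cnorm p))))). lra.
Qed.

Lemma qbin_bound p : (Cnorm p < 1)%R -> exists B, (0 <= B)%R /\ forall n j, (Cnorm (qbin p n j) <= B)%R.
Proof.
  intro Hp. set (c0 := exp (- (Cnorm p / ((1 - Cnorm p) * (1 - Cnorm p))))).
  set (U := exp (Cnorm p / (1 - Cnorm p))).
  assert (Hc0 : (0 < c0)%R) by apply exp_pos. assert (HU : (0 < U)%R) by apply exp_pos.
  exists (U / (c0 * c0))%R. split. apply Rlt_le, Rdiv_lt_0_compat; nra.
  intros n j. destruct (Compare_dec.le_lt_dec j n).
  - pose proof (qbin_closed p n j l) as H.
    assert (H1 : (Cnorm (qbin p n j) * Cnorm (P p j) * Cnorm (P p (n - j)) <= U)%R).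
    { rewrite <- !Cnorm_mult, H. apply part_upper'; auto. }
    pose proof (part_lower' p p j Hp Hp). pose proof (part_lower' p p (n - j) Hp Hp). fold c0 in H0, H2.
    pose proof (Cnorm_ge0 (qbin p n j)).
    apply Rmult_le_reg_r with (r := (c0 * c0)%R). nra.
    replace (U / (c0 * c0) * (c0 * c0))%R with U by (field; lra).
    eapply Rle_trans; [|apply H1]. rewrite Rmult_assoc. apply Rmult_le_compat_l; auto.
    apply Rmult_le_compat; lra.
  - rewrite qbin_zero, Cnorm_0 by auto. apply Rlt_le, Rdiv_lt_0_compat; nra.
Qed.

Lemma qbin_lim1 p m : (Cnorm p < 1)%R ->
  Ccv (fun N => qbin p (N + N) (N + m)) (Cinv (qpoch p p)).
Proof.
  intro Hp. set (L := qpoch p p). assert (HL : L <> C0) by (apply qpoch_nz; auto).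
  pose proof (qpoch_spec p p Hp) as HS. fold L in HS.
  apply (Ccv_ext (fun N => P p (N + N) * Cinv (P p (N + m) * P p (N - m)))).
  { exists m. intros N HN. pose proof (qbin_closed p (N + N) (N + m) ltac:(lia)) as H.
    replace (N + N - (N + m))%nat with (N - m)%nat in H by lia.
    rewrite <- H. field. split; apply P_nz; auto. }
  replace (Cinv L) with (L * Cinv (L * L)) by (field; auto).
  apply Ccv_mult. apply (Ccv_sub (fun N => P p N)); auto. intro; lia.
  apply Ccv_inv. 2: apply Cmult_nz; auto.
  apply Ccv_mult. apply (Ccv_sub (fun N => P p N)); auto. intro; lia.
  apply (Ccv_sub' (fun N => P p N) L (fun N => N - m)%nat m); auto. intro; lia.
Qed.

Lemma qbin_lim2 p m : (Cnorm p < 1)%R ->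
  Ccv (fun N => qbin p (N + N) (N - S m)) (Cinv (qpoch p p)).
Proof.
  intro Hp. set (L := qpoch p p). assert (HL : L <> C0) by (apply qpoch_nz; auto).
  pose proof (qpoch_spec p p Hp) as HS. fold L in HS.
  apply (Ccv_ext (fun N => P p (N + N) * Cinv (P p (N - S m) * P p (N + S m)))).
  { exists (S m). intros N HN. pose proof (qbin_closed p (N + N) (N - S m) ltac:(lia)) as H.
    replace (N + N - (N - S m))%nat with (N + S m)%nat in H by lia.
    rewrite <- H. field. split; apply P_nz; auto. }
  replace (Cinv L) with (L * Cinv (L * L)) by (field; auto).
  apply Ccv_mult. apply (Ccv_sub (fun N => P p N)); auto. intro; lia.
  apply Ccv_inv. 2: apply Cmult_nz; auto.
  apply Ccv_mult. 
  apply (Ccv_sub' (fun N => P p N) L (fun N => N - S m)%nat (S m)); auto. intro; lia.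
  apply (Ccv_sub (fun N => P p N)); auto. intro; lia.
Qed.

Definition Sf (p z : CC) : CC := G p z + G p (p / z) - C1.

Lemma jtp p z : p <> C0 -> (Cnorm p < 1)%R -> z <> C0 -> qpoch p p * theta z p = Sf p z.
Proof.
  intros Hp0 Hp Hz. set (L := qpoch p p). assert (HL : L <> C0) by (apply qpoch_nz; auto).
  destruct (qbin_bound p Hp) as [B [HB0 HB]].
  destruct (gterm_bound p z Hp) as [A1 [HA1 HA1b]].
  destruct (gterm_bound p (p / z) Hp) as [A2 [HA2 HA2b]].
  assert (T1 : Ccv (fun N => sumC (S N) (fun m => qbin p (N + N) (N + m) * cc p m * z ^ m)) (Cinv L * G p z)).
  { apply (tannery (fun N m => qbin p (N + N) (N + m) * cc p m * z ^ m) (fun m => Cinv L * (cc p m * z ^ m)) _ (B * A1) S).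
    - apply Rmult_le_pos; auto.
    - intros N m. replace (qbin p (N + N) (N + m) * cc p m * z ^ m) with (qbin p (N + N) (N + m) * (cc p m * z ^ m)) by ring.
      rewrite Cnorm_mult, Rmult_assoc. apply Rmult_le_compat; auto using Cnorm_ge0.
    - intro m. apply (Ccv_ext (fun N => qbin p (N + N) (N + m) * (cc p m * z ^ m))).
      exists O; intros; ring. apply Ccv_mult. apply qbin_lim1; auto. apply Ccv_const.
    - apply (Ccv_ext (fun n => Cinv L * gpart p z n)). exists O; intros; unfold gpart; rewrite sumC_scal; auto.
      apply Ccv_scal, G_spec; auto.
    - intro; lia. }
  assert (T2 : Ccv (fun N => sumC N (fun m => qbin p (N + N) (N - S m) * cc p (S m) * (p / z) ^ (S m))) (Cinv L * (G p (p / z) - C1))).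
  { apply (tannery (fun N m => qbin p (N + N) (N - S m) * cc p (S m) * (p / z) ^ (S m)) (fun m => Cinv L * (cc p (S m) * (p / z) ^ (S m))) _ (B * A2)%R (fun N => N)).
    - apply Rmult_le_pos; auto.
    - intros N m. replace (qbin p (N + N) (N - S m) * cc p (S m) * (p / z) ^ (S m)) with (qbin p (N + N) (N - S m) * (cc p (S m) * (p / z) ^ (S m))) by ring.
      rewrite Cnorm_mult, Rmult_assoc. apply Rmult_le_compat; auto using Cnorm_ge0.
      eapply Rle_trans. apply HA2b. rewrite <- tech_pow_Rmult. pose proof (pow_le (1/2) m ltac:(lra)). nra.
    - intro m. apply (Ccv_ext (fun N => qbin p (N + N) (N - S m) * (cc p (S m) * (p / z) ^ (S m)))).
      exists O; intros; ring. apply Ccv_mult. apply qbin_lim2; auto. apply Ccv_const.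
    - apply (Ccv_ext (fun n => Cinv L * (gpart p (p / z) (S n) - C1))).
      { exists O; intros n _. unfold gpart. rewrite sumC_shift, sumC_scal. unfold cc at 1. simpl. ring. }
      apply Ccv_scal, Ccv_minus. apply (Ccv_sub (gpart p (p / z))). apply G_spec; auto. intro; lia. apply Ccv_const.
    - intro; lia. }
  pose proof (Ccv_plus _ _ _ _ T1 T2) as T.
  assert (T' : Ccv (fun N => qpoch_part z p N * qpoch_part (p / z) p N) (Cinv L * G p z + Cinv L * (G p (p / z) - C1))).
  { apply (Ccv_ext _ _ _ (ex_intro _ O (fun N _ => eq_sym (fin_jtp p z N Hp0 Hz)))). auto. }
  pose proof (Ccv_mult _ _ _ _ (qpoch_spec z p Hp) (qpoch_spec (p / z) p Hp)) as T''.
  pose proof (Ccv_unique _ _ _ T' T'') as E.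
  unfold theta. rewrite <- E. unfold Sf. fold L. field. auto.
Qed.

Open Scope R_scope.
Open Scope C_scope.

Lemma Cnorm_pow_lt1 p n : (Cnorm p < 1)%R -> (0 < n)%nat -> (Cnorm (p ^ n)%C < 1)%R.
Proof. intros H Hn. rewrite Cnorm_pow. apply pow_lt_1_compat; [split; [apply Cnorm_ge0|auto]|auto]. Qed.

Lemma Copp_nz a : a <> C0 -> Copp a <> C0.
Proof. intros H E. apply H. replace a with (Copp (Copp a)) by ring. rewrite E. ring. Qed.
Lemma C1_nz' : C1 <> C0.
Proof. exact Coquelicot.Complex.C1_nz. Qed.
Ltac nz := repeat split; repeat (first [apply Copp_nz | apply Cpow_nz | apply Cmult_nz]); auto using C1_nz'.

Lemma Sf_parity p z : p <> C0 -> (Cnorm p < 1)%R -> z <> C0 ->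
  Sf p z = Sf (p ^ 4) (Copp (p * z ^ 2)) - z * Sf (p ^ 4) (Copp (p ^ 3 * z ^ 2)).
Proof.
  intros Hp0 Hp Hz. assert (Hp4 : (Cnorm (p ^ 4)%C < 1)%R) by (apply Cnorm_pow_lt1; auto).
  unfold Sf. rewrite (G_parity p z Hp), (G_parity p (p / z) Hp).
  replace (p ^ 4 / Copp (p * z ^ 2)) with (Copp (p * (p / z) ^ 2)) by (simpl; field; nz).
  rewrite (G_shift (p ^ 4) (p ^ 4 / Copp (p ^ 3 * z ^ 2)) Hp4).
  replace (p ^ 4 * (p ^ 4 / Copp (p ^ 3 * z ^ 2))) with (Copp (p ^ 3 * (p / z) ^ 2)) by (simpl; field; nz).
  set (a1 := G (p ^ 4) (Copp (p * z ^ 2))). set (a2 := G (p ^ 4) (Copp (p ^ 3 * z ^ 2))).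
  set (a3 := G (p ^ 4) (Copp (p * (p / z) ^ 2))). set (a4 := G (p ^ 4) (Copp (p ^ 3 * (p / z) ^ 2))).
  simpl. field. nz.
Qed.

Lemma theta_jtp w P : P <> C0 -> (Cnorm P < 1)%R -> w <> C0 -> theta w P = Sf P w * Cinv (qpoch P P).
Proof.
  intros HP HP1 Hw. rewrite <- (jtp P w HP HP1 Hw). field. apply qpoch_nz; auto.
Qed.

Lemma qpoch_zero z : qpoch z C0 = C1 - z.
Proof.
  apply Clim_eq. apply (Ccv_ext (fun _ => C1 - z)). 2: apply Ccv_const.
  exists 1%nat. intros n Hn. destruct n. lia. clear Hn. induction n. simpl. ring.
  change (qpoch_part z C0 (S (S n))) with (qpoch_part z C0 (S n) * (C1 - z * C0 ^ (S n))).
  rewrite <- IHn. simpl. ring.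
Qed.

Lemma theta_zero z : theta z C0 = C1 - z.
Proof. unfold theta. rewrite !qpoch_zero. unfold Cdiv. ring. Qed.

Definition Ef r w := Sf ((r ^ 2) ^ 4) (Copp (r ^ 2 * w ^ 2)).
Definition Of r w := Sf ((r ^ 2) ^ 4) (Copp ((r ^ 2) ^ 3 * w ^ 2)).

Lemma four_thetas r x : r <> C0 -> (Cnorm r < 1)%R -> x <> C0 ->
  theta (Copp ((r ^ 2) ^ 4 * x ^ 2)) ((r ^ 2) ^ 4) = Of r (r * x) * Cinv (qpoch ((r ^ 2) ^ 4) ((r ^ 2) ^ 4)) /\
  theta (Copp (r ^ 4 * x ^ 2)) ((r ^ 2) ^ 4) = Ef r (r * x) * Cinv (qpoch ((r ^ 2) ^ 4) ((r ^ 2) ^ 4)) /\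
  theta (Copp (r * x)) (r ^ 2) = (Ef r (r * x) + (r * x) * Of r (r * x)) * Cinv (qpoch (r ^ 2) (r ^ 2)) /\
  theta (r * x) (r ^ 2) = (Ef r (r * x) - (r * x) * Of r (r * x)) * Cinv (qpoch (r ^ 2) (r ^ 2)).
Proof.
  intros Hr Hr1 Hx.
  assert (Hp : (Cnorm (r ^ 2)%C < 1)%R) by (apply Cnorm_pow_lt1; auto).
  assert (Hp4 : (Cnorm ((r ^ 2) ^ 4)%C < 1)%R) by (apply Cnorm_pow_lt1; auto).
  split; [|split; [|split]].
  - replace (Copp ((r ^ 2) ^ 4 * x ^ 2)) with (Copp ((r ^ 2) ^ 3 * (r * x) ^ 2)) by (simpl; ring).
    apply theta_jtp; nz.
  - replace (Copp (r ^ 4 * x ^ 2)) with (Copp (r ^ 2 * (r * x) ^ 2)) by (simpl; ring).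
    apply theta_jtp; nz.
  - rewrite theta_jtp by nz. rewrite Sf_parity by nz.
    replace ((Copp (r * x)) ^ 2) with ((r * x) ^ 2) by (simpl; ring). unfold Ef, Of. ring.
  - rewrite theta_jtp by nz. rewrite Sf_parity by nz. unfold Ef, Of. ring.
Qed.

Lemma RtoC4 : RtoC 4 = C1 + C1 + C1 + C1.
Proof. unfold RtoC, Cplus; simpl. f_equal; ring. Qed.

Theorem main_aux (q r x y u v : CC) :
  Cpow r 4 = q ->
  Cnorm q < 1 ->
  x <> RtoC 0 -> y <> RtoC 0 -> u <> RtoC 0 -> v <> RtoC 0 ->
  let q2 := (q ^ 2)%C in
  let h := (r ^ 2)%C in
  (RtoC 4 * q * x * y * u * v *
     theta4 (- (q2 * x ^ 2)) (- (q2 * y ^ 2)) (- (q2 * u ^ 2)) (- (q2 * v ^ 2)) q2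
   + RtoC 4 * h * x * y *
     theta4 (- (q2 * x ^ 2)) (- (q2 * y ^ 2)) (- (q * u ^ 2)) (- (q * v ^ 2)) q2
   + RtoC 4 * h * u * v *
     theta4 (- (q * x ^ 2)) (- (q * y ^ 2)) (- (q2 * u ^ 2)) (- (q2 * v ^ 2)) q2
   + RtoC 4 *
     theta4 (- (q * x ^ 2)) (- (q * y ^ 2)) (- (q * u ^ 2)) (- (q * v ^ 2)) q2)%C
  =
  ((qpoch h h ^ 4) / (qpoch q2 q2 ^ 4) *
   ( theta4 (- (r * x)) (- (r * y)) (- (r * u)) (- (r * v)) h
   + theta4 (r * x) (r * y) (- (r * u)) (- (r * v)) h
   + theta4 (- (r * x)) (- (r * y)) (r * u) (r * v) h
   + theta4 (r * x) (r * y) (r * u) (r * v) h))%C.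
Proof.
  intros Hq Hq1 Hx Hy Hu Hv q2 h. subst q2 h. subst q.
  rewrite RtoC4.
  replace ((r ^ 4) ^ 2) with ((r ^ 2) ^ 4) by (simpl; ring).
  destruct (classic (r = C0)) as [Hr0|Hr0].
  - subst r. replace ((C0 ^ 2) ^ 4) with C0 by (simpl; ring). replace (C0 ^ 2) with C0 by (simpl; ring).
    unfold theta4. rewrite !theta_zero, !qpoch_zero. replace (C1 - C0) with C1 by ring.
    simpl. field. apply Coquelicot.Complex.C1_nz.
  - assert (Hr1 : (Cnorm r < 1)%R).
    { apply Rnot_le_lt. intro H. rewrite Cnorm_pow in Hq1. pose proof (pow_R1_Rle (Cnorm r) 4 H). lra. }
    destruct (four_thetas r x Hr0 Hr1 Hx) as [X1 [X2 [X3 X4]]].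
    destruct (four_thetas r y Hr0 Hr1 Hy) as [Y1 [Y2 [Y3 Y4]]].
    destruct (four_thetas r u Hr0 Hr1 Hu) as [U1 [U2 [U3 U4]]].
    destruct (four_thetas r v Hr0 Hr1 Hv) as [V1 [V2 [V3 V4]]].
    unfold theta4. rewrite X1, X2, X3, X4, Y1, Y2, Y3, Y4, U1, U2, U3, U4, V1, V2, V3, V4.
    assert (HL1 : qpoch (r ^ 2) (r ^ 2) <> C0) by (apply qpoch_nz; apply Cnorm_pow_lt1; auto).
    assert (HL4 : qpoch ((r ^ 2) ^ 4) ((r ^ 2) ^ 4) <> C0) by (apply qpoch_nz; apply Cnorm_pow_lt1; auto; apply Cnorm_pow_lt1; auto).
    set (L1 := qpoch (r ^ 2) (r ^ 2)) in *. set (L4 := qpoch ((r ^ 2) ^ 4) ((r ^ 2) ^ 4)) in *.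
    set (Ex := Ef r (r * x)). set (Ey := Ef r (r * y)). set (Eu := Ef r (r * u)). set (Ev := Ef r (r * v)).
    set (Ox := Of r (r * x)). set (Oy := Of r (r * y)). set (Ou := Of r (r * u)). set (Ov := Of r (r * v)).
    simpl. field. auto.
Qed.


Close Scope C_scope.
Open Scope R_scope.

(* r plays the role of the fixed fourth root q^{1/4}; q^{1/2} = r^2. *)
Theorem mainTheorem7 (q r x y u v : CC) :
  Cpow r 4 = q ->
  Cnorm q < 1 ->
  x <> RtoC 0 -> y <> RtoC 0 -> u <> RtoC 0 -> v <> RtoC 0 ->
  let q2 := (q ^ 2)%C in
  let h := (r ^ 2)%C in
  (RtoC 4 * q * x * y * u * v *
     theta4 (- (q2 * x ^ 2)) (- (q2 * y ^ 2)) (- (q2 * u ^ 2)) (- (q2 * v ^ 2)) q2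
   + RtoC 4 * h * x * y *
     theta4 (- (q2 * x ^ 2)) (- (q2 * y ^ 2)) (- (q * u ^ 2)) (- (q * v ^ 2)) q2
   + RtoC 4 * h * u * v *
     theta4 (- (q * x ^ 2)) (- (q * y ^ 2)) (- (q2 * u ^ 2)) (- (q2 * v ^ 2)) q2
   + RtoC 4 *
     theta4 (- (q * x ^ 2)) (- (q * y ^ 2)) (- (q * u ^ 2)) (- (q * v ^ 2)) q2)%C
  =
  ((qpoch h h ^ 4) / (qpoch q2 q2 ^ 4) *
   ( theta4 (- (r * x)) (- (r * y)) (- (r * u)) (- (r * v)) h
   + theta4 (r * x) (r * y) (- (r * u)) (- (r * v)) h
   + theta4 (- (r * x)) (- (r * y)) (r * u) (r * v) h
   + theta4 (r * x) (r * y) (r * u) (r * v) h))%C.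
Proof. exact (main_aux q r x y u v). Qed.
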